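(* Let $\mathcal A$ be the category of all topological abelian groups and $\mathcal A_2$ the category of Hausdorff topological abelian groups. For every subcategory $\mathcal B\subseteq\mathcal A$ (resp. $\mathcal B\subseteq\mathcal A_2$) there exists a subcategory $\mathcal B^{\otimes}\supseteq\mathcal B$ of $\mathcal A$ (resp. of $\mathcal A_2$) that has tensor product.
   Context: A continuous bihomomorphism $b:G\times H\to A$ is separately a continuous homomorphism in each variable and continuous at $(0,0)$. A subcategory $\mathcal C$ has tensor product if for all $G,H\in\mathcal C$ there is a pair $(T,\otimes_{\mathcal C})$ with $T\in\mathcal C$ and $\otimes_{\mathcal C}:G\times H\to T$ a continuous bihomomorphism such that every continuous bihomomorphism $b:G\times H\to B$ with $B\in\mathcal C$ factors as $b=\tilde b\circ\otimes_{\mathcal C}$ for some continuous homomorphism $\tilde b:T\to B$. *)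

(* Defs.v *)
From HB Require Import structures.
From mathcomp Require Import all_boot all_order all_algebra.
From mathcomp Require Import all_classical all_reals all_analysis.

Set Implicit Arguments.
Unset Strict Implicit.
Unset Printing Implicit Defensive.

Import GRing.Theory.
Local Open Scope ring_scope.
Local Open Scope classical_set_scope.

(* A (full) subcategory is given by a
   class of objects, i.e. a predicate on [topologicalZmodType]. *)
Definition subcat := topologicalZmodType -> Prop.

Definition cont_hom (G B : topologicalZmodType) (f : G -> B) : Prop :=
  {morph f : x y / x + y} /\ continuous f.

Definition cont_bihom (G H A : topologicalZmodType) (b : G -> H -> A) : Prop :=
  (forall h : H, cont_hom (fun g : G => b g h)) /\
  (forall g : G, cont_hom (b g)) /\
  {for (0, 0), continuous (fun p : G * H => b p.1 p.2)}.

Definition has_tensor (C : subcat) : Prop :=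
  forall G H : topologicalZmodType, C G -> C H ->
  exists T : topologicalZmodType, C T /\
  exists t : G -> H -> T, cont_bihom t /\
    forall B : topologicalZmodType, C B ->
    forall b : G -> H -> B, cont_bihom b ->
    exists bt : T -> B, cont_hom bt /\ forall g h, b g h = bt (t g h).

Definition hausdorff_cat : subcat := fun G => hausdorff_space G.

Definition subcat_le (C D : subcat) : Prop := forall G, C G -> D G.

(* Main.v *)
Require Import Defs.
From HB Require Import structures.
From mathcomp Require Import all_boot all_order all_algebra.
From mathcomp Require Import all_classical all_reals all_analysis.

Set Implicit Arguments.
Unset Strict Implicit.
Unset Printing Implicit Defensive.

Import GRing.Theory.
Local Open Scope ring_scope.
Local Open Scope classical_set_scope.

Section Tensor.
Variables (C : subcat) (G H : topologicalZmodType).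

Definition sumb (B : topologicalZmodType) (b : G -> H -> B) (s : seq (G * H)) : B :=
  \sum_(p <- s) b p.1 p.2.

Definition trel (s s' : seq (G * H)) : Prop :=
  forall (B : topologicalZmodType) (b : G -> H -> B), C B -> cont_bihom b ->
    sumb b s = sumb b s'.

Definition Tt := {P : set (seq (G * H)) | exists s, P = trel s}.

Definition mk (s : seq (G * H)) : Tt := exist _ (trel s) (ex_intro _ s erefl).

Definition rep (x : Tt) : seq (G * H) := projT1 (cid (proj2_sig x)).

Lemma mk_rep x : mk (rep x) = x.
Proof.
case: x => P hP; rewrite /rep /=; case: (cid hP) => s e /=.
subst P; rewrite /mk; congr exist; exact: Prop_irrelevance.
Qed.

Lemma mk_eq s s' : mk s = mk s' <-> trel s s'.
Proof.
split.
  move=> /(congr1 (@proj1_sig _ _)) /= e.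
  have : trel s' s' by [].
  rewrite -e => h B b CB hb; by rewrite (h B b CB hb).
move=> h; rewrite /mk; apply: eq_exist.
apply/funext => u; apply/propext; split => hu B b CB hb.
  by rewrite -(h B b CB hb) (hu B b CB hb).
by rewrite (h B b CB hb) (hu B b CB hb).
Qed.

Definition ev (B : topologicalZmodType) (b : G -> H -> B) (x : Tt) : B :=
  sumb b (rep x).

Lemma ev_mk (B : topologicalZmodType) (b : G -> H -> B) s :
  C B -> cont_bihom b -> ev b (mk s) = sumb b s.
Proof.
move=> CB hb; rewrite /ev.
have : mk (rep (mk s)) = mk s by rewrite mk_rep.
by move/mk_eq => h; apply: h.
Qed.

Lemma eqT x y : (forall (B : topologicalZmodType) (b : G -> H -> B), C B -> cont_bihom b ->
    ev b x = ev b y) -> x = y.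
Proof.
move=> h; rewrite -(mk_rep x) -(mk_rep y); apply/mk_eq => B b CB hb.
exact: h.
Qed.

Definition addT x y := mk (rep x ++ rep y).
Definition oppT x := mk (map (fun p => (- p.1, p.2)) (rep x)).
Definition zeroT := mk [::].

Lemma bihom_oppl (B : topologicalZmodType) (b : G -> H -> B) g h :
  cont_bihom b -> b (- g) h = - b g h.
Proof.
move=> [h1 _]; have [m _] := h1 h.
have e0 : b 0 h = 0.
  have := m 0 0; rewrite addr0 => e.
  by apply/eqP; rewrite -(subrr (b 0 h)) {2}e addrK.
by apply/eqP; rewrite -subr_eq0 opprK -m addNr e0.
Qed.

Lemma ev_add (B : topologicalZmodType) (b : G -> H -> B) x y : C B -> cont_bihom b ->
  ev b (addT x y) = ev b x + ev b y.
Proof. by move=> CB hb; rewrite /addT ev_mk // /sumb big_cat. Qed.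

Lemma ev_opp (B : topologicalZmodType) (b : G -> H -> B) x : C B -> cont_bihom b ->
  ev b (oppT x) = - ev b x.
Proof.
move=> CB hb; rewrite /oppT ev_mk // /sumb big_map /ev /sumb -sumrN.
by apply: eq_bigr => p _; rewrite bihom_oppl.
Qed.

Lemma ev_zero (B : topologicalZmodType) (b : G -> H -> B) : C B -> cont_bihom b -> ev b zeroT = 0.
Proof. by move=> CB hb; rewrite /zeroT ev_mk // /sumb big_nil. Qed.

Lemma addTA : associative addT.
Proof. by move=> x y z; apply: eqT => B b CB hb; rewrite !ev_add // addrA. Qed.
Lemma addTC : commutative addT.
Proof. by move=> x y; apply: eqT => B b CB hb; rewrite !ev_add // addrC. Qed.
Lemma add0T : left_id zeroT addT.
Proof. by move=> x; apply: eqT => B b CB hb; rewrite !ev_add // ev_zero // add0r. Qed.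
Lemma addNT : left_inverse zeroT oppT addT.
Proof. by move=> x; apply: eqT => B b CB hb; rewrite !ev_add // ev_opp // ev_zero // addNr. Qed.

HB.instance Definition _ := gen_eqMixin Tt.
HB.instance Definition _ := gen_choiceMixin Tt.
HB.instance Definition _ := GRing.isZmodule.Build Tt addTA addTC add0T addNT.

Inductive basic : set Tt -> Prop :=
| bT : basic setT
| bEv (B : topologicalZmodType) (b : G -> H -> B) (V : set B) :
    C B -> cont_bihom b -> open V -> basic (ev b @^-1` V)
| bI U W : basic U -> basic W -> basic (U `&` W).

Definition opT (U : set Tt) : Prop :=
  forall x, U x -> exists2 W, basic W & W x /\ W `<=` U.

Lemma opTT : opT setT.
Proof. by move=> x _; exists setT => //; constructor. Qed.

Lemma opTI : setI_closed opT.
Proof.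
move=> U V hU hV x [/hU [W1 b1 [w1 s1]] /hV [W2 b2 [w2 s2]]].
exists (W1 `&` W2); first exact: bI.
by split=> [|y [/s1 ? /s2 ?]].
Qed.

Lemma opTU (I : Type) (f : I -> set Tt) : (forall i, opT (f i)) -> opT (\bigcup_i f i).
Proof.
move=> h x [i _ /(h i) [W bW [wx sW]]]; exists W => //; split=> // y /sW fy.
by exists i.
Qed.

HB.instance Definition _ := isOpenTopological.Build Tt opTT opTI opTU.

Lemma basic_nbhs W x : basic W -> W x -> nbhs x W.
Proof.
move=> bW wx; exists W; split => //. change (opT W); rewrite /opT => y wy. exists W => //; by split.

Qed.

Lemma nbhsTE x A : nbhs x A -> exists2 W, basic W & W x /\ W `<=` A.
Proof.
move=> [U [oU Ux sU]]; have [W bW [wx sW]] := oU x Ux.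
exists W => //; split => // y /sW; exact: sU.
Qed.

Lemma ev_cont (B : topologicalZmodType) (b : G -> H -> B) : C B -> cont_bihom b -> continuous (ev b).
Proof.
move=> CB hb x A; rewrite nbhsE => -[V [oV Vx] sV].
apply: (filterS (fun y => @sV (ev b y))).
by apply: basic_nbhs => //; constructor.
Qed.

Lemma cont_into (X : topologicalType) (f : X -> Tt) x :
  (forall (B : topologicalZmodType) (b : G -> H -> B), C B -> cont_bihom b ->
     {for x, continuous (ev b \o f)}) -> {for x, continuous f}.
Proof.
move=> h A /nbhsTE [W bW [wx sW]].
apply: (filterS sW) => /=.
elim: bW wx => {W sW} [|B b V CB hb oV|U W _ IU _ IW] wx.
- exact: filterT.
- have := h B b CB hb V; apply; rewrite nbhsE; exists V => //.
- by case: wx => ux wx; apply: filterI; [apply: IU | apply: IW].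
Qed.

Lemma subT_cont : continuous (fun x : Tt * Tt => x.1 - x.2).
Proof.
move=> x; apply: cont_into => B b CB hb.
have -> : ev b \o (fun x : Tt * Tt => x.1 - x.2) =
   (fun y : B * B => y.1 - y.2) \o (fun x : Tt * Tt => (ev b x.1, ev b x.2)).
  by apply/funext => y /=; rewrite ev_add // ev_opp.
apply: continuous_comp; last exact: sub_continuous.
apply: cvg_pair.
  by apply: continuous_comp; [exact: cvg_fst | exact: ev_cont].
by apply: continuous_comp; [exact: cvg_snd | exact: ev_cont].
Qed.

HB.instance Definition _ := PreTopologicalNmodule_isTopologicalZmodule.Build Tt subT_cont.

End Tensor.

Lemma has_tensor_of (C : subcat) :
  (forall G H : topologicalZmodType, C G -> C H -> C (Tt C G H)) -> has_tensor C.
Proof.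
move=> hT G H CG CH; exists (Tt C G H); split; first exact: hT.
exists (fun g h => mk C [:: (g, h)]); split.
  split; [move=> h; split|split; [move=> g; split|]].
  - move=> g g'; apply: eqT => B b CB hb.
    rewrite ev_add // !ev_mk // /sumb !big_seq1 /=.
    by case: hb => /(_ h) [m _] _; rewrite m.
  - move=> g; apply: cont_into => B b CB hb.
    rewrite (_ : ev b \o _ = fun g => b g h); first by case: hb => /(_ h) [_ c] _; exact: c.
    by apply/funext => g' /=; rewrite ev_mk // /sumb big_seq1.
  - move=> h h'; apply: eqT => B b CB hb.
    rewrite ev_add // !ev_mk // /sumb !big_seq1 /=.
    by case: hb => _ [/(_ g) [m _] _]; rewrite m.
  - move=> h; apply: cont_into => B b CB hb.
    rewrite (_ : ev b \o _ = b g); first by case: hb => _ [/(_ g) [_ c] _]; exact: c.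
    by apply/funext => h' /=; rewrite ev_mk // /sumb big_seq1.
  - apply: cont_into => B b CB hb.
    rewrite (_ : ev b \o _ = fun p : G * H => b p.1 p.2); first by case: hb => _ [_ c].
    by apply/funext => p /=; rewrite ev_mk // /sumb big_seq1.
move=> B CB b hb; exists (ev b); split.
  split; [move=> x y; exact: ev_add | exact: ev_cont].
by move=> g h; rewrite ev_mk // /sumb big_seq1.
Qed.

Lemma hausdorff_Tt (C : subcat) (G H : topologicalZmodType) :
  (forall B, C B -> hausdorff_space B) -> hausdorff_space (Tt C G H).
Proof.
move=> hC p q cl; apply: eqT => B b CB hb; apply: (hC B CB) => A V nA nV.
have [z [Az Vz]] := cl _ _ (ev_cont CB hb nA) (ev_cont CB hb nV).
by exists (ev b z).
Qed.

Theorem proposition2p11 :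
  (forall B : subcat, exists B' : subcat, subcat_le B B' /\ has_tensor B') /\
  (forall B : subcat, subcat_le B hausdorff_cat ->
     exists B' : subcat,
       subcat_le B B' /\ subcat_le B' hausdorff_cat /\ has_tensor B').
Proof.
split.
  move=> B; exists (fun _ => True); split => //.
  exact: has_tensor_of.
move=> B hB; exists hausdorff_cat; split => //; split => //.
apply: has_tensor_of => G H _ _.
exact: hausdorff_Tt.
Qed.
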